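(* Let $|\psi_{ABC}\rangle\in\mathbb{C}^2\otimes\mathbb{C}^2\otimes\mathbb{C}^d$ be a pure state that is entangled with respect to the bipartition $AB|C$. Then there exist projective measurements $\{P_{a|0}\}_{a=0}^1,\{P_{a|1}\}_{a=0}^1$ on subsystem $A$ and $\{Q_{b|0}\}_{b=0}^1,\{Q_{b|1}\}_{b=0}^1$ on subsystem $B$ such that the assemblage $\Sigma=\{\sigma_{ab|xy}\}$, $\sigma_{ab|xy}=\mathrm{Tr}_{AB}\big((P_{a|x}\otimes Q_{b|y}\otimes\mathbb{1})|\psi_{ABC}\rangle\langle\psi_{ABC}|\big)$ ($a,b,x,y\in\{0,1\}$), is on the edge of the set of no-signaling assemblages.
   Context: Scenario with two untrusted parties, binary outcomes $a,b\in\{0,1\}$ and binary settings $x,y\in\{0,1\}$, trusted system $\mathbb{C}^d$. A no-signaling assemblage is a collection of positive semidefinite operators $\sigma_{ab|xy}$ on $\mathbb{C}^d$ with $\sum_{a,b}\sigma_{ab|xy}=\rho$ independent of $x,y$ and of trace one, $\sum_b\sigma_{ab|xy}$ independent of $y$, and $\sum_a\sigma_{ab|xy}$ independent of $x$. An LHS assemblage is one of the form $\sigma_{ab|xy}=\sum_j q_j p_j(a|x)p'_j(b|y)\rho_j$ with probability weights $q_j$, density operators $\rho_j$ and conditional probability distributions $p_j,p'_j$. A no-signaling assemblage $\Sigma$ is on the edge if whenever $\Sigma=\epsilon\Sigma_1+(1-\epsilon)\Sigma_2$ with $\epsilon\in[0,1]$, $\Sigma_1$ LHS and $\Sigma_2$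 no-signaling, necessarily $\epsilon=0$. *)

(* Defs.v *)
From HB Require Import structures.
From mathcomp Require Import all_boot all_order all_algebra.
From mathcomp Require Import reals.
From mathcomp Require Import complex.
Set Implicit Arguments. Unset Strict Implicit. Unset Printing Implicit Defensive.
Import Order.TTheory GRing.Theory Num.Theory.
Local Open Scope ring_scope.

Section Defs.
Variable R : realType.
Local Notation C := R[i].

Definition adjmx m n (A : 'M[C]_(m, n)) : 'M[C]_(n, m) :=
  \matrix_(i, j) (A j i)^*.

Definition hermitian n (A : 'M[C]_n) : Prop := adjmx A = A.

Definition psd n (A : 'M[C]_n) : Prop :=
  hermitian A /\ forall v : 'cV[C]_n, 0 <= (adjmx v *m A *m v) 0 0.

Definition density n (rho : 'M[C]_n) : Prop := psd rho /\ \tr rho = 1.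

(* assemblage with binary outcomes a b and settings x y: sigma a b x y *)
Definition assemblage d := bool -> bool -> bool -> bool -> 'M[C]_d.

Definition no_signaling d (sigma : assemblage d) : Prop :=
  (forall a b x y, psd (sigma a b x y)) /\
  (exists rho : 'M[C]_d, \tr rho = 1 /\
     forall x y, \sum_(a : bool) \sum_(b : bool) sigma a b x y = rho) /\
  (forall a x y y', \sum_(b : bool) sigma a b x y = \sum_(b : bool) sigma a b x y') /\
  (forall b x x' y, \sum_(a : bool) sigma a b x y = \sum_(a : bool) sigma a b x' y).

Definition cond_prob (p : bool -> bool -> C) : Prop :=
  (forall a x, 0 <= p a x) /\ (forall x, \sum_(a : bool) p a x = 1).

(* local hidden state assemblage (finite decomposition) *)
Definition LHS d (sigma : assemblage d) : Prop :=
  exists (n : nat) (q : 'I_n -> C) (p p' : 'I_n -> bool -> bool -> C)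
         (rho : 'I_n -> 'M[C]_d),
    (forall j, 0 <= q j) /\ \sum_(j < n) q j = 1 /\
    (forall j, density (rho j)) /\
    (forall j, cond_prob (p j)) /\ (forall j, cond_prob (p' j)) /\
    forall a b x y,
      sigma a b x y = \sum_(j < n) (q j * p j a x * p' j b y) *: rho j.

Definition on_edge d (sigma : assemblage d) : Prop :=
  no_signaling sigma /\
  forall (eps : C) (sigma1 sigma2 : assemblage d),
    0 <= eps <= 1 -> LHS sigma1 -> no_signaling sigma2 ->
    (forall a b x y,
       sigma a b x y = eps *: sigma1 a b x y + (1 - eps) *: sigma2 a b x y) ->
    eps = 0.

(* pure states on C^2 (x) C^2 (x) C^d, given by coordinates psi i j k *)
Definition tri_state d := 'I_2 -> 'I_2 -> 'I_d -> C.

Definition normalized d (psi : tri_state d) : Prop :=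
  \sum_(i < 2) \sum_(j < 2) \sum_(k < d) psi i j k * (psi i j k)^* = 1.

Definition product_AB_C d (psi : tri_state d) : Prop :=
  exists (phi : 'I_2 -> 'I_2 -> C) (chi : 'I_d -> C),
    forall i j k, psi i j k = phi i j * chi k.

Definition entangled_AB_C d (psi : tri_state d) : Prop := ~ product_AB_C psi.

Definition projective_meas (P : bool -> 'M[C]_2) : Prop :=
  (forall a, hermitian (P a) /\ P a *m P a = P a) /\
  \sum_(a : bool) P a = 1%:M.

(* sigma_{ab|xy} = Tr_AB((P_{a|x} (x) Q_{b|y} (x) 1) |psi><psi|), written in
   coordinates: entry (k,l) equals
   sum_{i,j,i',j'} P(i,i') Q(j,j') psi(i',j',k) conj(psi(i,j,l)). *)
Definition induced_assemblage d (psi : tri_state d)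
  (P Q : bool -> bool -> 'M[C]_2) : assemblage d :=
  fun a b x y => \matrix_(k, l)
    \sum_(i < 2) \sum_(j < 2) \sum_(i' < 2) \sum_(j' < 2)
       P a x i i' * Q b y j j' * psi i' j' k * (psi i j l)^*.

End Defs.

(* Main.v *)
Require Import Defs.
From HB Require Import structures.
From mathcomp Require Import all_boot all_order all_algebra.
From mathcomp Require Import reals.
From mathcomp Require Import complex ring.
Import Order.TTheory GRing.Theory Num.Theory.
Local Open Scope ring_scope.
Set Implicit Arguments. Unset Strict Implicit. Unset Printing Implicit Defensive.

Section Proof.
Variable R : realType.
Local Notation C := R[i].

Definition i0 : 'I_2 := @Ordinal 2 0 isT.
Definition i1 : 'I_2 := @Ordinal 2 1 isT.

Lemma conjM (x y : C) : (x * y)^* = x^* * y^*.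
Proof. exact: rmorphM. Qed.
Lemma conjD (x y : C) : (x + y)^* = x^* + y^*.
Proof. exact: rmorphD. Qed.
Lemma conjB (x y : C) : (x - y)^* = x^* - y^*.
Proof. exact: rmorphB. Qed.
Lemma conjN (x : C) : (- x)^* = - x^*.
Proof. exact: rmorphN. Qed.
Lemma conj1 : (1 : C)^* = 1.
Proof. exact: rmorph1. Qed.
Lemma conj0 : (0 : C)^* = 0.
Proof. exact: rmorph0. Qed.
Lemma conjN1 : (-1 : C)^* = -1.
Proof. exact: rmorphN1. Qed.
Lemma conj_sum n (F : 'I_n -> C) : (\sum_(i < n) F i)^* = \sum_(i < n) (F i)^*.
Proof. exact: rmorph_sum. Qed.
Lemma conjV (x : C) : (x^-1)^* = (x^*)^-1.
Proof. exact: fmorphV. Qed.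
Lemma conjnat n : (n%:R : C)^* = n%:R.
Proof. exact: rmorph_nat. Qed.

Lemma big2 (F : 'I_2 -> C) : \sum_(i < 2) F i = F i0 + F i1.
Proof.
rewrite big_ord_recr big_ord_recr big_ord0 /= add0r.
by congr (F _ + F _); apply: val_inj.
Qed.

Lemma ord2P (P : 'I_2 -> Prop) : P i0 -> P i1 -> forall j, P j.
Proof.
move=> h0 h1 [[|[|//]] Hj].
  by rewrite (_ : Ordinal Hj = i0) //; apply: val_inj.
by rewrite (_ : Ordinal Hj = i1) //; apply: val_inj.
Qed.

Definition alpha (a x : bool) (i : 'I_2) : C :=
  if x then (if a && (val i == 1%N) then -1 else 1)
  else (if val i == a :> nat then 1 else 0).
Definition cf (x : bool) : C := if x then 2^-1 else 1.
Definition Pm (a x : bool) : 'M[C]_2 :=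
  \matrix_(i, j) (cf x * alpha a x i * alpha a x j).

Lemma conj_alpha a x i : (alpha a x i)^* = alpha a x i.
Proof.
rewrite /alpha; case: x; case: ifP => _; by rewrite ?conj1 ?conj0 ?conjN1.
Qed.

Lemma conj_cf x : (cf x)^* = cf x.
Proof. by case: x; rewrite /= ?conj1 // conjV conjnat. Qed.

Lemma cf_ge0 x : 0 <= cf x.
Proof. by case: x; rewrite /= ?ler01 // invr_ge0 ler0n. Qed.

Lemma Pm_proj x : projective_meas (fun a => Pm a x).
Proof.
split.
- move=> a; split.
  + apply/matrixP => i j; rewrite /adjmx !mxE !conjM conj_cf !conj_alpha.
    by rewrite mulrAC.
  + apply/matrixP => i j; rewrite !mxE big2 !mxE.
    move: i j; apply: ord2P; apply: ord2P; case: a; case: x; rewrite /alpha /=; by field.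
- apply/matrixP => i j; rewrite summxE big_bool !mxE.
  move: i j; apply: ord2P; apply: ord2P; case: x; rewrite /alpha /=; by field.
Qed.

Definition W d (psi : tri_state R d) a x b y (k : 'I_d) : C :=
  \sum_(i < 2) \sum_(j < 2) alpha a x i * alpha b y j * psi i j k.

Lemma entry d (psi : tri_state R d) a b x y k l :
  induced_assemblage psi Pm Pm a b x y k l =
  cf x * cf y * W psi a x b y k * (W psi a x b y l)^*.
Proof.
rewrite !mxE /W !big2 !mxE !conjD !conjM !conj_alpha.
ring.
Qed.

Definition qf n (A : 'M[C]_n) (u v : 'I_n -> C) :=
  \sum_k \sum_l (u k)^* * A k l * v l.

Lemma quadE n (A : 'M[C]_n) (u : 'I_n -> C) :
  (adjmx (\col_k u k) *m A *m (\col_k u k)) 0 0 = qf A u u.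
Proof.
rewrite mxE /qf.
under eq_bigr => l _ do rewrite !mxE big_distrl /=.
rewrite exchange_big /=; apply: eq_bigr => k _; apply: eq_bigr => l _.
by rewrite !mxE.
Qed.

Lemma psd_form n (A : 'M[C]_n) u : psd A -> 0 <= qf A u u.
Proof. by move=> [_ H]; rewrite -quadE. Qed.

Lemma herm n (A : 'M[C]_n) (k l : 'I_n) : Defs.hermitian A -> A k l = (A l k)^*.
Proof. by move=> H; rewrite -{1}H mxE. Qed.

Lemma qf_conj n (A : 'M[C]_n) u v : Defs.hermitian A -> qf A u v = (qf A v u)^*.
Proof.
move=> H; rewrite /qf conj_sum exchange_big /=; apply: eq_bigr => k _.
rewrite conj_sum; apply: eq_bigr => l _.
by rewrite !conjM conjCK (herm l k H); ring.
Qed.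

Lemma qf_expand n (A : 'M[C]_n) (z y : 'I_n -> C) (al be : C) :
  qf A (fun k => al * z k + be * y k) (fun k => al * z k + be * y k) =
  al^* * al * qf A z z + al^* * be * qf A z y + be^* * al * qf A y z
  + be^* * be * qf A y y.
Proof.
rewrite /qf !mulr_sumr -!big_split; apply: eq_bigr => k _.
rewrite !mulr_sumr -!big_split; apply: eq_bigr => l _ /=.
rewrite conjD !conjM; ring.
Qed.

Lemma kernel n (A : 'M[C]_n) z : psd A -> qf A z z = 0 -> forall y, qf A y z = 0.
Proof.
move=> hA hz y.
set b := qf A y z; set Q := qf A y y.
have hQ : 0 <= Q by exact: psd_form.
have hQc : Q^* = Q by apply: conj_Creal; exact: ger0_real.
have hzy : qf A z y = b^* by rewrite (qf_conj _ _ hA.1).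
have := psd_form (fun k => (Q + 1) * z k + (- b) * y k) hA.
rewrite qf_expand hz hzy -/b -/Q conjD hQc conj1 conjN.
have -> : (Q + 1) * (Q + 1) * 0 + (Q + 1) * - b * b^* + - b^* * (Q + 1) * b
   + - b^* * - b * Q = - ((Q + 2%:R) * (b * b^*)) by ring.
rewrite oppr_ge0 pmulr_rle0; last by rewrite ltr_wpDl // ltr0n.
move=> H.
have : b * b^* = 0 by apply/eqP; rewrite eq_le H mul_conjC_ge0.
by move/eqP; rewrite mulf_eq0 conjC_eq0 orbb => /eqP.
Qed.


Lemma qfD n (A B : 'M[C]_n) u v : qf (A + B) u v = qf A u v + qf B u v.
Proof.
rewrite /qf -big_split; apply: eq_bigr => k _.
rewrite -big_split; apply: eq_bigr => l _ /=; rewrite mxE; ring.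
Qed.

Lemma qfZ n (c : C) (A : 'M[C]_n) u v : qf (c *: A) u v = c * qf A u v.
Proof.
rewrite /qf mulr_sumr; apply: eq_bigr => k _.
rewrite mulr_sumr; apply: eq_bigr => l _ /=; rewrite mxE; ring.
Qed.

Lemma qf0 n (u v : 'I_n -> C) : qf 0 u v = 0.
Proof. by rewrite /qf big1 // => k _; rewrite big1 // => l _; rewrite mxE mulr0 mul0r. Qed.

Lemma qf_sum n m (A : 'I_m -> 'M[C]_n) u v :
  qf (\sum_(j < m) A j) u v = \sum_(j < m) qf (A j) u v.
Proof.
exact: (big_morph (fun M => qf M u v) (fun M N => qfD M N u v) (qf0 u v)).
Qed.

Lemma qf_rank1 n (c : C) (w z : 'I_n -> C) :
  qf (\matrix_(k, l) (c * w k * (w l)^*)) z z =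
  c * (\sum_k (z k)^* * w k) * (\sum_k (z k)^* * w k)^*.
Proof.
rewrite conj_sum -mulrA big_distrlr mulr_sumr /qf; apply: eq_bigr => k _.
rewrite mulr_sumr; apply: eq_bigr => l _; rewrite !mxE !conjM conjCK /=; ring.
Qed.

Lemma sum_delta n (F : 'I_n -> C) k : \sum_(r < n) (r == k)%:R * F r = F k.
Proof.
rewrite (bigD1 k) //= eqxx mul1r big1 ?addr0 // => r /negbTE ->.
by rewrite mul0r.
Qed.

Lemma inj2 (b b' : bool) (r : 'I_2 -> C) :
  \sum_j alpha b false j * r j = 0 -> \sum_j alpha b' true j * r j = 0 ->
  forall j, r j = 0.
Proof.
rewrite !big2 /alpha /=.
case: b; case: b' => /=; rewrite ?mul1r ?mul0r ?add0r ?addr0 ?mulN1r => h1 h2.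
- by rewrite h1 subr0 in h2; apply: ord2P.
- by rewrite h1 addr0 in h2; apply: ord2P.
- by rewrite h1 sub0r in h2; move/eqP: h2; rewrite oppr_eq0 => /eqP h2; apply: ord2P.
- by rewrite h1 add0r in h2; apply: ord2P.
Qed.

Lemma injN (ax bx : bool -> bool) (N : 'I_2 -> 'I_2 -> C) :
  (forall x y, \sum_(i < 2) \sum_(j < 2) alpha (ax x) x i * alpha (bx y) y j * N i j = 0) ->
  forall i j, N i j = 0.
Proof.
move=> H.
have hR : forall x j, \sum_(i < 2) alpha (ax x) x i * N i j = 0.
  move=> x; apply: (@inj2 (bx false) (bx true)).
    rewrite -[X in _ = X](H x false) exchange_big; apply: eq_bigr => j _.
    by rewrite mulr_sumr; apply: eq_bigr => i _; ring.
  rewrite -[X in _ = X](H x true) exchange_big; apply: eq_bigr => j _.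
  by rewrite mulr_sumr; apply: eq_bigr => i _; ring.
move=> i j; move: i; apply: (@inj2 (ax false) (ax true)); exact: hR.
Qed.


Lemma entry_mx d (psi : tri_state R d) a b x y :
  induced_assemblage psi Pm Pm a b x y =
  \matrix_(k, l) (cf x * cf y * W psi a x b y k * (W psi a x b y l)^*).
Proof. by apply/matrixP => k l; rewrite [RHS]mxE entry. Qed.

Lemma NS d (psi : tri_state R d) : normalized psi ->
  no_signaling (induced_assemblage psi Pm Pm).
Proof.
move=> hn; split; [|split; [|split]].
- move=> a b x y; split.
  + apply/matrixP => k l; rewrite /adjmx mxE !entry !conjM conjCK !conj_cf; ring.
  + move=> v.
    have -> : v = \col_k v k 0 by apply/matrixP => k l; rewrite mxE ord1.
    rewrite quadE entry_mx qf_rank1 -mulrA mulr_ge0 ?mul_conjC_ge0 //.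
    by rewrite mulr_ge0 // cf_ge0.
- exists (\matrix_(k, l) \sum_(i < 2) \sum_(j < 2) psi i j k * (psi i j l)^*); split.
  + rewrite /mxtrace; under eq_bigr do rewrite mxE.
    rewrite exchange_big /=. under eq_bigr do rewrite exchange_big /=.
    exact: hn.
  + move=> x y; apply/matrixP => k l.
    rewrite !big_bool !entry_mx !mxE /W !big2 !conjD !conjM !conj_alpha.
    case: x; case: y; rewrite /alpha /cf /=; by field.
- move=> a x y y'; apply/matrixP => k l.
  rewrite !big_bool !entry_mx !mxE /W !big2 !conjD !conjM !conj_alpha.
  case: a; case: x; case: y; case: y'; rewrite /alpha /cf /=; by field.
- move=> b x x' y; apply/matrixP => k l.
  rewrite !big_bool !entry_mx !mxE /W !big2 !conjD !conjM !conj_alpha.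
  case: b; case: x; case: x'; case: y; rewrite /alpha /cf /=; by field.
Qed.

End Proof.

Section Main.
Variable R : realType.
Local Notation C := R[i].

Lemma zero_sum_split n (eps X : C) (t : 'I_n -> C) (j : 'I_n) :
  0 <= eps -> eps <= 1 -> eps != 0 -> 0 <= X -> (forall i, 0 <= t i) ->
  eps * (\sum_i t i) + (1 - eps) * X = 0 -> t j = 0.
Proof.
move=> he0 he1 hne hX ht hsum.
have hS : 0 <= \sum_i t i by apply: sumr_ge0 => i _.
have h1 : 0 <= eps * \sum_i t i by apply: mulr_ge0.
have h2 : 0 <= (1 - eps) * X by apply: mulr_ge0; rewrite // subr_ge0.
move/eqP: hsum; rewrite paddr_eq0 // => /andP[/eqP hA _].
move/eqP: hA; rewrite mulf_eq0 (negbTE hne) /= => /eqP hS0.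
by apply: (psumr_eq0P (fun i _ => ht i) hS0).
Qed.

Lemma qf_delta n (A : 'M[C]_n) (v : 'I_n -> C) m :
  qf A (fun r => (r == m)%:R) v = \sum_l A m l * v l.
Proof.
rewrite /qf (bigD1 m) //= [X in _ + X]big1 ?addr0 => [|r hr].
  by rewrite eqxx conj1; apply: eq_bigr => l _; rewrite mul1r.
by rewrite big1 // => l _; rewrite (negbTE hr) conj0 !mul0r.
Qed.

End Main.

Unset Implicit Arguments.

Theorem theorem2 (R : realType) (d : nat) (psi : tri_state R d) :
  normalized psi -> entangled_AB_C psi ->
  exists P Q : bool -> bool -> 'M[R[i]]_2,
    (forall x, projective_meas (fun a => P a x)) /\
    (forall y, projective_meas (fun b => Q b y)) /\
    on_edge (induced_assemblage psi P Q).
Proof.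
move=> hn hent.
exists (@Pm R), (@Pm R).
split; first exact: Pm_proj.
split; first exact: Pm_proj.
split; first exact: NS.
move=> eps s1 s2 /andP[he0 he1] [n [q [p [p' [rho [hq [hsq [hrho [hp [hp' hs1]]]]]]]]]] hs2 hdec.
have [//|heps] := eqVneq eps 0.
exfalso.
have [j hj] : exists j, q j != 0.
  case: (pickP (fun j => q j != 0)) => [j hj|h0]; first by exists j.
  have : \sum_i q i = 0 by rewrite big1 // => i _; apply/eqP; move/negbFE: (h0 i).
  by rewrite hsq => /eqP; rewrite oner_eq0.
pose ax x := p j true x != 0.
have hax : forall x, p j (ax x) x != 0.
  move=> x; rewrite /ax; case: (eqVneq (p j true x) 0) => h; last by rewrite h.
  rewrite /=.
  have := (hp j).2 x; rewrite big_bool /= h add0r => ->; exact: oner_neq0.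
pose bx y := p' j true y != 0.
have hbx : forall y, p' j (bx y) y != 0.
  move=> y; rewrite /bx; case: (eqVneq (p' j true y) 0) => h; last by rewrite h.
  rewrite /=.
  have := (hp' j).2 y; rewrite big_bool /= h add0r => ->; exact: oner_neq0.
have [hpsd htr] := hrho j.
have [m hm] : exists m, rho j m m != 0.
  case: (pickP (fun m => rho j m m != 0)) => [m hm|h0]; first by exists m.
  have : \tr (rho j) = 0.
    by rewrite /mxtrace big1 // => i _; apply/eqP; move/negbFE: (h0 i).
  by rewrite htr => /eqP; rewrite oner_eq0.
pose g k := (rho j m k)^*.
have key : forall x y (z : 'I_d -> R[i]),
    \sum_r (z r)^* * W psi (ax x) x (bx y) y r = 0 -> qf (rho j) z z = 0.
  move=> x y z hs.
  have h0 : qf (induced_assemblage psi (Pm R) (Pm R) (ax x) (bx y) x y) z z = 0.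
    by rewrite entry_mx qf_rank1 hs mulr0 mul0r.
  rewrite hdec qfD !qfZ hs1 qf_sum in h0.
  have hX : 0 <= qf (s2 (ax x) (bx y) x y) z z.
    by apply: psd_form; exact: (hs2.1 _ _ _ _).
  have ht : forall j', 0 <= qf ((q j' * p j' (ax x) x * p' j' (bx y) y) *: rho j') z z.
    move=> j'; rewrite qfZ; apply: mulr_ge0.
      by rewrite !mulr_ge0 // ?(hp j').1 ?(hp' j').1.
    exact: psd_form (hrho j').1.
  have := zero_sum_split j he0 he1 heps hX ht h0.
  rewrite qfZ => /eqP; rewrite mulf_eq0 => /orP[|/eqP //].
  by rewrite !mulf_eq0 (negbTE hj) (negbTE (hax x)) (negbTE (hbx y)).
have minor : forall x y k l,
    W psi (ax x) x (bx y) y l * g k = W psi (ax x) x (bx y) y k * g l.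
  move=> x y k l.
  set w := W psi (ax x) x (bx y) y.
  pose z := fun r : 'I_d => (r == k)%:R * (w l)^* - (r == l)%:R * (w k)^*.
  have hs : \sum_r (z r)^* * w r = 0.
    transitivity (\sum_r (r == k)%:R * (w l * w r) - \sum_r (r == l)%:R * (w k * w r)).
      rewrite -sumrB; apply: eq_bigr => r _; rewrite /z conjB !conjM !conjCK !conjnat; ring.
    by rewrite !sum_delta mulrC subrr.
  have H0 := kernel hpsd (key x y z hs) (fun r => (r == m)%:R).
  have H1 : rho j m k * (w l)^* - rho j m l * (w k)^* = 0.
    rewrite -H0 qf_delta.
    transitivity (\sum_r (r == k)%:R * (rho j m r * (w l)^*) - \sum_r (r == l)%:R * (rho j m r * (w k)^*)).
      by rewrite !sum_delta.
    rewrite -sumrB; apply: eq_bigr => r _; rewrite /z; ring.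
  have := congr1 Num.conj H1; rewrite conjB !conjM !conjCK conj0 -/(g k) -/(g l).
  by move/eqP; rewrite subr_eq0 => /eqP E; rewrite mulrC E mulrC.
apply: hent.
have hgm : g m != 0 by rewrite /g conjC_eq0.
exists (fun i j => psi i j m / g m), g => i j0 k.
have hN : psi i j0 k * g m - psi i j0 m * g k = 0.
  apply: (@injN R ax bx (fun i j => psi i j k * g m - psi i j m * g k)) => x y.
  transitivity (W psi (ax x) x (bx y) y k * g m - W psi (ax x) x (bx y) y m * g k).
    by rewrite /W !big2; ring.
  by rewrite (minor x y m k) subrr.
move/eqP: hN; rewrite subr_eq0 => /eqP hN.
by rewrite mulrAC -hN mulfK.
Qed.
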